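(* In the torn-paper channel with lost pieces described in the context, with any distribution on the input $X^n$, there is a finite constant $S$ such that for all integers $J>L\ge1$ and every $\delta>0$, $$\lim_{n\to\infty}\frac{H({\mathcal Y}_{\ge J})}{n}\le 2\big(S\sqrt{L/J}+\delta\big).$$
   Context: All logarithms are base 2 and $H(\cdot)$ denotes Shannon entropy. Channel model: the input is a binary string $X^n$. Let $N_1,N_2,\dots$ be i.i.d. positive-integer random variables (distribution may depend on $n$) with $E[N_1]=\ell_n$, where $\alpha:=\lim_{n\to\infty}(\log n)/\ell_n\in(0,\infty)$. $X^n$ is cut into $K$ consecutive fragments $\vec X_1,\dots,\vec X_K$ of lengths $N_1,\dots,N_K$ ($K$ random, last length truncated so that the lengths sum to $n$). Each fragment is independently deleted with probability $d(N_i)$ for a given $d:\mathbb{Z}_{>0}\to[0,1]$; ${\mathcal Y}$ is the multiset of non-deleted fragments. ${\mathcal Y}_{\ge J}$ is the sub-multiset of fragments in ${\mathcal Y}$ with $N_i\ge (J/L)\log n$. Standing regularity assumptions: $E[N_1/\log n]$ and $E[(N_1/\log n)^2]$ are bounded in $n$. *)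

(* Defs.v *)
From Stdlib Require Import Reals List Arith Bool.
From Coquelicot Require Import Coquelicot.
Import ListNotations.
Open Scope R_scope.

Definition log2 (x : R) : R := ln x / ln 2.

Fixpoint all_strings (n : nat) : list (list bool) :=
  match n with
  | O => [[]]
  | S n' => flat_map (fun s => [false :: s; true :: s]) (all_strings n')
  end.

(* compositions of m: lists of positive integers summing to m
   (fuel f >= m suffices since each part is >= 1) *)
Fixpoint comps_f (f m : nat) : list (list nat) :=
  match m with
  | O => [[]]
  | S _ => match f with
           | O => []
           | S f' => flat_map (fun k => map (cons k) (comps_f f' (m - k)))
                              (seq 1 m)
           end
  end.
Definition comps (m : nat) : list (list nat) := comps_f m m.

Definition tail_prob (q : nat -> R) (m : nat) : R :=
  1 - fold_right Rplus 0 (map q (seq 0 m)).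

(* probability that the cut process N_1, N_2, ... (i.i.d. with pmf q)
   produces the fragment lengths c = [c_1; ...; c_K] (last one truncated):
   N_i = c_i for i < K and N_K >= c_K *)
Fixpoint comp_prob (q : nat -> R) (c : list nat) : R :=
  match c with
  | [] => 1
  | [ck] => tail_prob q ck
  | ci :: c' => q ci * comp_prob q c'
  end.

(* probability of the keep/delete pattern m (true = kept) *)
Fixpoint mask_prob (d : nat -> R) (c : list nat) (m : list bool) : R :=
  match c, m with
  | ci :: c', b :: m' => (if b then 1 - d ci else d ci) * mask_prob d c' m'
  | _, _ => 1
  end.

Fixpoint cut (x : list bool) (c : list nat) : list (list bool) :=
  match c with
  | [] => []
  | k :: c' => firstn k x :: cut (skipn k x) c'
  end.

Fixpoint kept {A} (fr : list A) (m : list bool) : list A :=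
  match fr, m with
  | f :: fr', b :: m' => if b then f :: kept fr' m' else kept fr' m'
  | _, _ => []
  end.

(* outcome of the channel: input string, fragment lengths, keep pattern *)
Definition outcome : Type := (list bool * list nat * list bool)%type.

Definition outcomes (n : nat) : list outcome :=
  flat_map (fun x => flat_map (fun c => map (fun m => (x, c, m))
                                              (all_strings (length c)))
                              (comps n))
           (all_strings n).

Definition outcome_prob (px : list bool -> R) (q : nat -> R) (d : nat -> R)
  (w : outcome) : R :=
  let '(x, c, m) := w in px x * comp_prob q c * mask_prob d c m.

(* Y_{>=J}: (as a list, to be read as a multiset) the non-deleted fragments
   of length >= (J/L) log n *)
Definition Y_ge (n J L : nat) (w : outcome) : list (list bool) :=
  let '(x, c, m) := w in
  filter (fun f => if Rle_dec (INR J / INR L * log2 (INR n)) (INR (length f))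
                   then true else false)
         (kept (cut x c) m).

Definition lbl_eq_dec := list_eq_dec Bool.bool_dec.
Definition multiset_eqb (l1 l2 : list (list bool)) : bool :=
  forallb (fun y => Nat.eqb (count_occ lbl_eq_dec l1 y) (count_occ lbl_eq_dec l2 y))
          (l1 ++ l2).

(* Shannon entropy (base 2) of a random variable Y on a finite outcome list
   with probabilities P, where values are compared by the decidable
   equivalence eqv:  H(Y) = - sum_v P(Y=v) log P(Y=v)
                          = - sum_w P(w) log P(Y = Y w). *)
Definition entropy {V} (eqv : V -> V -> bool) (Om : list outcome)
  (P : outcome -> R) (Y : outcome -> V) : R :=
  let pY v := fold_right Rplus 0
                (map (fun w' => if eqv (Y w') v then P w' else 0) Om) in
  - fold_right Rplus 0 (map (fun w => P w * log2 (pY (Y w))) Om).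

Definition H_Yge (px : nat -> list bool -> R) (p : nat -> nat -> R)
  (d : nat -> R) (J L n : nat) : R :=
  entropy multiset_eqb (outcomes n) (outcome_prob (px n) (p n) d) (Y_ge n J L).

(* Main.v *)
Require Import Defs.
From Stdlib Require Import Reals List Arith Bool Lra Lia.
From Coquelicot Require Import Coquelicot.
Import ListNotations.
Open Scope R_scope.

Notation sumL f l := (fold_right Rplus 0 (map f l)).

Lemma sumL_app {A} (f : A -> R) l1 l2 : sumL f (l1 ++ l2) = sumL f l1 + sumL f l2.
Proof. induction l1; simpl; [ring| rewrite IHl1; ring]. Qed.

Lemma sumL_flat_map {A B} (f : B -> R) (g : A -> list B) l :
  sumL f (flat_map g l) = sumL (fun x => sumL f (g x)) l.
Proof. induction l; simpl; auto. rewrite map_app, fold_right_app.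
  rewrite <- IHl. generalize (sumL f (flat_map g l)). clear. induction (map f (g a)) as [|z r IH]; simpl; intros; [ring|]. rewrite IH; ring. Qed.

Lemma sumL_map {A B} (f : B -> R) (h : A -> B) l : sumL f (map h l) = sumL (fun x => f (h x)) l.
Proof. rewrite map_map. reflexivity. Qed.

Lemma sumL_ext {A} (f g : A -> R) l : (forall x, In x l -> f x = g x) -> sumL f l = sumL g l.
Proof. induction l; simpl; intros H; auto. rewrite H, IHl; auto. Qed.

Lemma sumL_le {A} (f g : A -> R) l : (forall x, In x l -> f x <= g x) -> sumL f l <= sumL g l.
Proof. induction l; simpl; intros H; [lra|]. specialize (IHl (fun x h => H x (or_intror h))).
  specialize (H a (or_introl eq_refl)). lra. Qed.

Lemma sumL_nonneg {A} (f : A -> R) l : (forall x, In x l -> 0 <= f x) -> 0 <= sumL f l.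
Proof. induction l; simpl; intros H; [lra|].
  specialize (IHl (fun x h => H x (or_intror h))). specialize (H a (or_introl eq_refl)). lra. Qed.

Lemma sumL_scal {A} (c : R) (f : A -> R) l : sumL (fun x => c * f x) l = c * sumL f l.
Proof. induction l; simpl; [ring| rewrite IHl; ring]. Qed.

Lemma sumL_plus {A} (f g : A -> R) l : sumL (fun x => f x + g x) l = sumL f l + sumL g l.
Proof. induction l; simpl; [ring| rewrite IHl; ring]. Qed.

Lemma sumL_elem {A} (f : A -> R) l x : (forall y, In y l -> 0 <= f y) -> In x l -> f x <= sumL f l.
Proof. induction l; simpl; intros H Hx; [contradiction|].
  destruct Hx as [<-|Hx].
  - assert (0 <= sumL f l) by (apply sumL_nonneg; auto). lra.
  - specialize (IHl (fun y h => H y (or_intror h)) Hx). specialize (H a (or_introl eq_refl)). lra. Qed.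

Lemma sumL_swap {A B} (h : A -> B -> R) (l1 : list A) (l2 : list B) :
  sumL (fun x => sumL (fun y => h x y) l2) l1 = sumL (fun y => sumL (fun x => h x y) l1) l2.
Proof. induction l1; simpl.
  - induction l2; simpl; auto. rewrite <- IHl2; ring.
  - rewrite IHl1. rewrite <- sumL_plus. reflexivity. Qed.

Definition psum (f : nat -> R) (m : nat) : R := sumL f (seq 0 m).

Lemma psum_S f m : psum f (S m) = psum f m + f m.
Proof. unfold psum. rewrite seq_S, sumL_app. simpl. ring. Qed.

Lemma psum_sum_n f m : psum f (S m) = sum_n f m.
Proof. induction m. - unfold psum; simpl. rewrite sum_O. ring.
  - rewrite psum_S, IHm, sum_Sn. reflexivity. Qed.

Lemma psum_lim f S : is_series f S -> is_lim_seq (psum f) S.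
Proof. intros H. apply is_lim_seq_incr_1.
  apply is_lim_seq_ext with (sum_n f). intros; rewrite psum_sum_n; auto. exact H. Qed.

Lemma tail_cmp f g Sf Sg m : is_series f Sf -> is_series g Sg ->
  (forall k, (m <= k)%nat -> f k <= g k) -> Sf - psum f m <= Sg - psum g m.
Proof. intros Hf Hg Hle.
  assert (Hd : forall N, (m <= N)%nat -> psum g m - psum f m <= psum g N - psum f N).
  { intros N HN. induction HN; [lra|]. rewrite !psum_S. specialize (Hle m0 HN). lra. }
  assert (Hl : is_lim_seq (fun N => psum g N - psum f N) (Sg - Sf)).
  { apply (is_lim_seq_minus _ _ Sg Sf); try apply psum_lim; auto. reflexivity. }
  assert (Rbar_le (psum g m - psum f m) (Sg - Sf)).
  { apply (is_lim_seq_le_loc (fun _ => psum g m - psum f m) (fun N => psum g N - psum f N)); auto.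
    exists m; auto. apply is_lim_seq_const. }
  simpl in H. lra. Qed.

Lemma psum_le_series f S m : is_series f S -> (forall k, 0 <= f k) -> psum f m <= S.
Proof. intros H Hp. apply (is_lim_seq_incr_compare (psum f) S). apply psum_lim; auto.
  intros; rewrite psum_S; specialize (Hp n); lra. Qed.

Lemma is_series_mult_l c (a : nat -> R) l : is_series a l -> is_series (fun n => c * a n) (c * l).
Proof. intros H. exact (is_series_scal_l c a l H). Qed.

Lemma psum_scal c f m : psum (fun k => c * f k) m = c * psum f m.
Proof. unfold psum. apply sumL_scal. Qed.

Lemma psum_nonneg f m : (forall k, 0 <= f k) -> 0 <= psum f m.
Proof. intros; unfold psum; apply sumL_nonneg; auto. Qed.

Lemma S1 (q : nat -> R) M2 m : (forall k, 0 <= q k) -> is_series q 1 ->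
  is_series (fun k => INR k ^ 2 * q k) M2 ->
  psum (fun k => INR k ^ 2 * q k) m + (1 - psum q m) * INR m ^ 2 <= M2.
Proof. intros Hq H1 H2.
  pose proof (tail_cmp (fun k => INR m ^ 2 * q k) (fun k => INR k ^ 2 * q k) (INR m ^ 2 * 1) M2 m
    (is_series_mult_l _ _ _ H1) H2) as T.
  rewrite psum_scal in T. 
  assert (forall k, (m <= k)%nat -> INR m ^ 2 * q k <= INR k ^ 2 * q k).
  { intros k Hk. apply Rmult_le_compat_r; auto. apply le_INR in Hk.
    pose proof (pos_INR m). nra. }
  specialize (T H). nra. Qed.

Lemma S2 (q : nat -> R) M2 ell m : (forall k, 0 <= q k) -> (1 <= m)%nat ->
  is_series (fun k => INR k * q k) ell ->
  is_series (fun k => INR k ^ 2 * q k) M2 ->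
  ell - psum (fun k => INR k * q k) m <= M2 / INR m.
Proof. intros Hq Hm H1 H2.
  assert (Hm' : 1 <= INR m) by (apply (le_INR 1); auto).
  pose proof (tail_cmp (fun k => INR k * q k) (fun k => / INR m * (INR k ^ 2 * q k)) ell (/ INR m * M2) m
    H1 (is_series_mult_l _ _ _ H2)) as T.
  rewrite psum_scal in T.
  assert (forall k, (m <= k)%nat -> INR k * q k <= / INR m * (INR k ^ 2 * q k)).
  { intros k Hk. apply le_INR in Hk.
    assert (INR k * q k = / INR m * (INR m * INR k * q k)) by (field; lra).
    rewrite H. apply Rmult_le_compat_l. apply Rlt_le, Rinv_0_lt_compat; lra.
    specialize (Hq k). pose proof (pos_INR k).
    assert (0 <= (INR k - INR m) * (INR k * q k)) by (apply Rmult_le_pos; nra). simpl. nra. }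
  specialize (T H).
  assert (0 <= psum (fun k => INR k ^ 2 * q k) m).
  { apply psum_nonneg. intros k; pose proof (Hq k); pose proof (pos_INR k); nra. }
  assert (0 <= / INR m) by (apply Rlt_le, Rinv_0_lt_compat; lra).
  assert (0 <= / INR m * psum (fun k => INR k ^ 2 * q k) m) by (apply Rmult_le_pos; auto).
  unfold Rdiv. lra. Qed.

Definition gsq (c : list nat) : R := sumL (fun k => INR k ^ 2) c.
Definition Pf q f m := sumL (comp_prob q) (comps_f f m).
Definition Gf q f m := sumL (fun c => comp_prob q c * gsq c) (comps_f f m).

Lemma comps_f_0 f : comps_f f 0 = [[]].
Proof. destruct f; reflexivity. Qed.

Lemma comps_step f' m' (F : list nat -> R) :
  sumL F (comps_f (S f') (S m')) =
  sumL (fun k => sumL (fun c' => F (k :: c')) (comps_f f' (S m' - k))) (seq 1 m') + F [S m'].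
Proof.
  change (comps_f (S f') (S m')) with
    (flat_map (fun k => map (cons k) (comps_f f' (S m' - k))) (seq 1 (S m'))).
  rewrite sumL_flat_map, seq_S, sumL_app. f_equal.
  - apply sumL_ext. intros; rewrite sumL_map. reflexivity.
  - simpl. rewrite Nat.sub_diag, comps_f_0. simpl. ring.
Qed.

Lemma in_comps_S f' m' c : In c (comps_f (S f') (S m')) ->
  exists k c', c = k :: c' /\ (1 <= k <= S m')%nat /\ In c' (comps_f f' (S m' - k)).
Proof.
  change (comps_f (S f') (S m')) with
    (flat_map (fun k => map (cons k) (comps_f f' (S m' - k))) (seq 1 (S m'))).
  intros H. apply in_flat_map in H as [k [Hk Hc]]. apply in_seq in Hk.
  apply in_map_iff in Hc as [c' [<- Hc']]. exists k, c'. repeat split; auto; lia.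
Qed.

Lemma comps_nonempty f j c : (0 < j)%nat -> In c (comps_f f j) -> c <> [].
Proof. intros Hj H. destruct j; [lia|]. destruct f; [simpl in H; contradiction|].
  apply in_comps_S in H as [k [c' [-> _]]]. discriminate. Qed.

Lemma comps_len f : forall m c, In c (comps_f f m) -> (length c <= m)%nat.
Proof. induction f; intros m c H.
  - destruct m; simpl in H; [destruct H as [<-|[]]; simpl; lia| contradiction].
  - destruct m. + rewrite comps_f_0 in H. destruct H as [<-|[]]; simpl; lia.
    + apply in_comps_S in H as [k [c' [-> [Hk Hc]]]]. apply IHf in Hc. simpl. lia.
Qed.

Lemma comp_prob_cons q k c' : c' <> [] -> comp_prob q (k :: c') = q k * comp_prob q c'.
Proof. destruct c'; [congruence| reflexivity]. Qed.

Lemma psum_S0 f m' : psum f (S m') = f 0%nat + sumL f (seq 1 m').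
Proof. reflexivity. Qed.

Section Q.
Variable q : nat -> R.
Hypothesis Hq0 : q 0%nat = 0.
Hypothesis Hqnn : forall k, 0 <= q k.
Hypothesis Hqle : forall m, psum q m <= 1.

Lemma tail_nonneg m : 0 <= tail_prob q m.
Proof. unfold tail_prob. pose proof (Hqle m). unfold psum in *. lra. Qed.

Lemma comp_prob_nonneg c : 0 <= comp_prob q c.
Proof. induction c as [|a c IH]; simpl; [lra|]. destruct c; [apply tail_nonneg|].
  apply Rmult_le_pos; auto. Qed.

Lemma gsq_nonneg c : 0 <= gsq c.
Proof. unfold gsq. apply sumL_nonneg. intros; apply pow2_ge_0. Qed.

Lemma inner_P f' j k : (0 < j)%nat ->
  sumL (fun c' => comp_prob q (k :: c')) (comps_f f' j) = q k * Pf q f' j.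
Proof. intros Hj. unfold Pf. rewrite <- sumL_scal. apply sumL_ext. intros c Hc.
  apply comp_prob_cons. eapply comps_nonempty; eauto. Qed.

Lemma inner_G f' j k : (0 < j)%nat ->
  sumL (fun c' => comp_prob q (k :: c') * gsq (k :: c')) (comps_f f' j) =
  q k * (INR k ^ 2 * Pf q f' j + Gf q f' j).
Proof. intros Hj. unfold Pf, Gf.
  rewrite <- sumL_scal, <- sumL_plus, <- sumL_scal. apply sumL_ext. intros c Hc.
  rewrite comp_prob_cons by (eapply comps_nonempty; eauto). unfold gsq; simpl. ring. Qed.

Lemma Pf_one f : forall m, (m <= f)%nat -> Pf q f m = 1.
Proof. induction f; intros m Hm.
  - assert (m = 0%nat) by lia; subst. unfold Pf; simpl; ring.
  - destruct m. + unfold Pf; rewrite comps_f_0; simpl; ring.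
    + unfold Pf. rewrite comps_step. fold (Pf q).
      rewrite (sumL_ext _ q).
      * simpl comp_prob. unfold tail_prob. change (fold_right Rplus 0 (map q (seq 0 (S m))))
          with (psum q (S m)). rewrite psum_S0, Hq0. ring.
      * intros k Hk. apply in_seq in Hk. rewrite inner_P by lia. rewrite IHf by lia. ring.
Qed.

Lemma Gf_nonneg f m : 0 <= Gf q f m.
Proof. unfold Gf. apply sumL_nonneg. intros. apply Rmult_le_pos; [apply comp_prob_nonneg|apply gsq_nonneg]. Qed.

Lemma sum_q_expand (l : list nat) A a b :
  sumL (fun k => q k * (INR k ^ 2 + (a * (A - INR k) + b))) l =
  sumL (fun k => INR k ^ 2 * q k) l + (a * A + b) * sumL q l - a * sumL (fun k => INR k * q k) l.
Proof. induction l; cbn [map fold_right]; [ring|]. rewrite IHl. ring. Qed.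

Lemma Gf_sq f : forall m, (m <= f)%nat -> Gf q f m <= INR m ^ 2.
Proof. induction f; intros m Hm.
  - assert (m = 0%nat) by lia; subst. unfold Gf, gsq; simpl. lra.
  - destruct m. + unfold Gf; rewrite comps_f_0; simpl. unfold gsq; simpl; lra.
    + unfold Gf. rewrite comps_step. fold (Gf q).
      rewrite (sumL_ext _ (fun k => q k * (INR k ^ 2 * 1 + Gf q f (S m - k)))).
      2:{ intros k Hk. apply in_seq in Hk. rewrite inner_G by lia. rewrite Pf_one by lia. ring. }
      eapply Rle_trans.
      { apply Rplus_le_compat_r. apply (sumL_le _ (fun k => q k * INR (S m) ^ 2)).
        intros k Hk. apply in_seq in Hk. apply Rmult_le_compat_l; auto.
        specialize (IHf (S m - k)%nat ltac:(lia)). rewrite minus_INR in IHf by lia.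
        assert (1 <= INR k) by (apply (le_INR 1); lia).
        assert (INR k <= INR (S m)) by (apply le_INR; lia). nra. }
      cbn [comp_prob]. unfold gsq; cbn [map fold_right]. unfold tail_prob.
      change (fold_right Rplus 0 (map q (seq 0 (S m)))) with (psum q (S m)).
      rewrite psum_S0, Hq0.
      rewrite (sumL_ext (fun k => q k * INR (S m) ^ 2) (fun k => INR (S m) ^ 2 * q k)) by (intros; ring).
      rewrite sumL_scal. ring_simplify. lra.
Qed.

Lemma Gf_lin (M2 a b m0 : R) (Ha : 0 <= a) (Hb : 0 <= b)
  (Hs1 : forall m, psum (fun k => INR k ^ 2 * q k) m + (1 - psum q m) * INR m ^ 2 <= M2)
  (Hs2 : forall m, (1 <= m)%nat -> m0 <= INR m -> M2 <= a * psum (fun k => INR k * q k) m)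
  (Hsm : forall m, INR m < m0 -> INR m ^ 2 <= b) :
  forall f m, (m <= f)%nat -> Gf q f m <= a * INR m + b.
Proof. induction f; intros m Hm.
  - assert (m = 0%nat) by lia; subst. unfold Gf, gsq; simpl. lra.
  - destruct (Rlt_or_le (INR m) m0) as [Hlt|Hge].
    { pose proof (Gf_sq (S f) m Hm). specialize (Hsm m Hlt). pose proof (pos_INR m). nra. }
    destruct m. + unfold Gf; rewrite comps_f_0; simpl. unfold gsq; simpl; lra.
    + unfold Gf. rewrite comps_step. fold (Gf q).
      rewrite (sumL_ext _ (fun k => q k * (INR k ^ 2 * 1 + Gf q f (S m - k)))).
      2:{ intros k Hk. apply in_seq in Hk. rewrite inner_G by lia. rewrite Pf_one by lia. ring. }
      eapply Rle_trans.
      { apply Rplus_le_compat_r.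
        apply (sumL_le _ (fun k => q k * (INR k ^ 2 + (a * (INR (S m) - INR k) + b)))).
        intros k Hk. apply in_seq in Hk. apply Rmult_le_compat_l; auto.
        specialize (IHf (S m - k)%nat ltac:(lia)). rewrite minus_INR in IHf by lia. lra. }
      rewrite sum_q_expand.
      cbn [comp_prob]. unfold gsq; cbn [map fold_right]. unfold tail_prob.
      change (fold_right Rplus 0 (map q (seq 0 (S m)))) with (psum q (S m)).
      specialize (Hs1 (S m)). specialize (Hs2 (S m) ltac:(lia) Hge).
      rewrite !psum_S0 in Hs1, Hs2. rewrite psum_S0, Hq0 in *.
      pose proof (Hqle (S m)) as H1. rewrite psum_S0, Hq0 in H1.
      pose proof (pos_INR (S m)).
      assert (0 <= (a * INR (S m) + b) * (1 - (0 + sumL q (seq 1 m)))) by (apply Rmult_le_pos; nra).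
      simpl INR in *. ring_simplify in Hs1. ring_simplify in Hs2. nra.
Qed.
End Q.

Lemma all_strings_len n x : In x (all_strings n) -> length x = n.
Proof. revert x; induction n; intros x H; simpl in H.
  - destruct H as [<-|[]]; reflexivity.
  - apply in_flat_map in H as [s [Hs H]]. apply IHn in Hs.
    destruct H as [<-|[<-|[]]]; simpl; auto. Qed.

Lemma in_all_strings s : In s (all_strings (length s)).
Proof. induction s; simpl; auto. apply in_flat_map. exists s; split; auto.
  destruct a; simpl; auto. Qed.

Lemma mask_sum d c : sumL (mask_prob d c) (all_strings (length c)) = 1.
Proof. induction c as [|ci c IH]; simpl; [ring|]. rewrite sumL_flat_map.
  transitivity (sumL (mask_prob d c) (all_strings (length c))); [|exact IH]. apply sumL_ext. intros s _. simpl. ring. Qed.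

Lemma mask_nonneg d c m : (forall k, 0 <= d k <= 1) -> 0 <= mask_prob d c m.
Proof. intros Hd. revert m; induction c; intros m; destruct m; simpl; try lra.
  apply Rmult_le_pos; auto. specialize (Hd a). destruct b; lra. Qed.

Lemma outcomes_sum n (F : outcome -> R) : sumL F (outcomes n) =
  sumL (fun x => sumL (fun c => sumL (fun m => F (x, c, m)) (all_strings (length c))) (comps n)) (all_strings n).
Proof. unfold outcomes. rewrite sumL_flat_map. apply sumL_ext; intros x _.
  rewrite sumL_flat_map. apply sumL_ext; intros c _. rewrite sumL_map. reflexivity. Qed.

Lemma in_outcomes n w : In w (outcomes n) -> exists x c m, w = (x, c, m) /\
  In x (all_strings n) /\ In c (comps n) /\ In m (all_strings (length c)).
Proof. unfold outcomes. intros H. apply in_flat_map in H as [x [Hx H]].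
  apply in_flat_map in H as [c [Hc H]]. apply in_map_iff in H as [m [<- Hm]].
  exists x, c, m; auto. Qed.

Lemma expected_g n px q d :
  sumL (fun w => outcome_prob px q d w * gsq (snd (fst w))) (outcomes n) =
  Gf q n n * sumL px (all_strings n).
Proof. rewrite outcomes_sum. rewrite <- sumL_scal. apply sumL_ext; intros x _.
  rewrite Rmult_comm. unfold Gf, comps. rewrite <- sumL_scal. apply sumL_ext; intros c _.
  rewrite (sumL_ext _ (fun m => (px x * comp_prob q c * gsq c) * mask_prob d c m)).
  - rewrite sumL_scal, mask_sum. simpl. ring.
  - intros m _. simpl. ring. Qed.

Lemma outcome_prob_nonneg px q d w : (forall x, 0 <= px x) -> (forall k, 0 <= d k <= 1) ->
  q 0%nat = 0 -> (forall k, 0 <= q k) -> (forall m, psum q m <= 1) ->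
  0 <= outcome_prob px q d w.
Proof. intros Hpx Hd H0 Hq Hle. destruct w as [[x c] m]. simpl.
  apply Rmult_le_pos; [apply Rmult_le_pos|]; auto. apply comp_prob_nonneg; auto.
  apply mask_nonneg; auto. Qed.

Lemma meq_spec l1 l2 : multiset_eqb l1 l2 = true <->
  forall y, count_occ lbl_eq_dec l1 y = count_occ lbl_eq_dec l2 y.
Proof. unfold multiset_eqb. rewrite forallb_forall. split.
  - intros H y. destruct (in_dec lbl_eq_dec y (l1 ++ l2)) as [Hi|Hn].
    + apply H in Hi. apply Nat.eqb_eq; auto.
    + rewrite in_app_iff in Hn.
      rewrite (proj1 (count_occ_not_In lbl_eq_dec l1 y)) by tauto.
      rewrite (proj1 (count_occ_not_In lbl_eq_dec l2 y)) by tauto. reflexivity.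
  - intros H y _. apply Nat.eqb_eq; auto. Qed.

Lemma meq_refl l : multiset_eqb l l = true.
Proof. apply meq_spec; auto. Qed.
Lemma meq_trans a b c : multiset_eqb a b = true -> multiset_eqb b c = true -> multiset_eqb a c = true.
Proof. rewrite !meq_spec. intros H1 H2 y. rewrite H1; auto. Qed.
Lemma meq_sym a b : multiset_eqb a b = multiset_eqb b a.
Proof. destruct (multiset_eqb a b) eqn:E1; destruct (multiset_eqb b a) eqn:E2; auto.
  - rewrite meq_spec in E1. assert (multiset_eqb b a = true) by (apply meq_spec; intros; auto). congruence.
  - rewrite meq_spec in E2. assert (multiset_eqb a b = true) by (apply meq_spec; intros; auto). congruence. Qed.

Lemma sumL_opp {A} (f : A -> R) l : - sumL f l = sumL (fun x => - f x) l.
Proof. induction l; cbn [map fold_right]; [ring|]. rewrite <- IHl. ring. Qed.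

Lemma ln_le_x x : 0 < x -> ln x <= x - 1.
Proof. intros. pose proof (exp_ineq1_le (ln x)). rewrite exp_ln in H0; auto. lra. Qed.

Lemma gibbs {V} (eqv : V -> V -> bool) (Om : list outcome) (P : outcome -> R) (Y : outcome -> V)
  (U : list V) (r : V -> R)
  (Hrefl : forall v, eqv v v = true) (Hsym : forall u v, eqv u v = eqv v u)
  (Htrans : forall u v w, eqv u v = true -> eqv v w = true -> eqv u w = true)
  (HP : forall w, In w Om -> 0 <= P w) (Hr : forall u, 0 <= r u)
  (HrY : forall w, In w Om -> 0 < r (Y w)) (HU : forall w, In w Om -> In (Y w) U) :
  entropy eqv Om P Y <= sumL (fun w => P w * (- log2 (r (Y w)))) Om + sumL r U / ln 2.
Proof.
  unfold entropy. cbv zeta.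
  set (pY := fun v => sumL (fun w' => if eqv (Y w') v then P w' else 0) Om).
  change (fun w => P w * log2 (sumL (fun w' => if eqv (Y w') (Y w) then P w' else 0) Om))
    with (fun w => P w * log2 (pY (Y w))).
  set (Q := fun w => sumL (fun u => if eqv (Y w) u then r u else 0) U).
  assert (Hln2 : 0 < ln 2) by (pose proof ln_lt_2; lra).
  rewrite sumL_opp.
  eapply Rle_trans.
  { apply (sumL_le _ (fun w => P w * (- log2 (r (Y w))) + / ln 2 * (P w * Q w * / pY (Y w)))).
    intros w Hw. destruct (Rle_lt_or_eq_dec 0 (P w) (HP w Hw)) as [Hpos|Hz].
    2:{ rewrite <- Hz. lra. }
    assert (HpY : P w <= pY (Y w)).
    { unfold pY. pose proof (sumL_elem (fun w' => if eqv (Y w') (Y w) then P w' else 0) Om w) as T.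
      cbv beta in T. rewrite Hrefl in T. apply T; auto.
      intros y Hy. destruct (eqv (Y y) (Y w)); auto; lra. }
    assert (HQ : r (Y w) <= Q w).
    { unfold Q. pose proof (sumL_elem (fun u => if eqv (Y w) u then r u else 0) U (Y w)) as T.
      cbv beta in T. rewrite Hrefl in T. apply T; auto.
      intros y Hy. destruct (eqv (Y w) y); auto; lra. }
    pose proof (HrY w Hw) as Hrp.
    set (p := pY (Y w)) in *. set (qq := Q w) in *.
    assert (0 < p) by lra. assert (0 < qq) by lra.
    assert (H1 : ln (qq / p) <= qq / p - 1) by (apply ln_le_x; apply Rdiv_lt_0_compat; auto).
    rewrite ln_div in H1 by auto.
    assert (H2 : ln (r (Y w)) <= ln qq) by (apply ln_le; auto).
    assert (H3 : - ln p <= - ln (r (Y w)) + qq / p) by lra.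
    unfold log2. unfold Rdiv in *.
    assert (0 <= P w * / ln 2) by (apply Rmult_le_pos; [lra| apply Rlt_le, Rinv_0_lt_compat; auto]).
    assert (E : P w * / ln 2 * (- ln p) <= P w * / ln 2 * (- ln (r (Y w)) + qq * / p))
      by (apply Rmult_le_compat_l; auto).
    replace (- (P w * (ln p * / ln 2))) with (P w * / ln 2 * (- ln p)) by ring.
    eapply Rle_trans; [exact E|]. right; ring. }
  rewrite sumL_plus, sumL_scal. unfold Rdiv. rewrite (Rmult_comm (sumL r U)).
  apply Rplus_le_compat_l. apply Rmult_le_compat_l.
  { apply Rlt_le, Rinv_0_lt_compat; auto. }
  rewrite (sumL_ext _ (fun w => sumL (fun u => if eqv (Y w) u then r u * (P w * / pY u) else 0) U)).
  2:{ intros w Hw. unfold Q.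
      transitivity (sumL (fun u => (P w * / pY (Y w)) * (if eqv (Y w) u then r u else 0)) U).
      { rewrite sumL_scal. ring. }
      apply sumL_ext. intros u Hu. destruct (eqv (Y w) u) eqn:E; [|ring].
      assert (pY (Y w) = pY u).
      { unfold pY. apply sumL_ext. intros w' _. destruct (eqv (Y w') (Y w)) eqn:E1;
        destruct (eqv (Y w') u) eqn:E2; auto.
        - rewrite (Htrans _ _ _ E1 E) in E2; discriminate.
        - rewrite Hsym in E. rewrite (Htrans _ _ _ E2 E) in E1; discriminate. }
      rewrite H. ring. }
  rewrite sumL_swap. apply sumL_le. intros u Hu.
  rewrite (sumL_ext _ (fun w => r u * / pY u * (if eqv (Y w) u then P w else 0))).
  2:{ intros w _. destruct (eqv (Y w) u); ring. }
  rewrite sumL_scal. fold (pY u).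
  assert (0 <= pY u).
  { unfold pY. apply sumL_nonneg. intros y Hy. destruct (eqv (Y y) u); auto; lra. }
  destruct (Rle_lt_or_eq_dec _ _ H) as [Hp|Hp].
  - field_simplify; [lra| lra].
  - rewrite <- Hp. rewrite Rmult_0_r. apply Hr.
Qed.

Definition rho (n : nat) (s : list bool) : R := (/2) ^ (length s) / (4 * (INR n + 1)).
Definition rv (n : nat) (v : list (list bool)) : R := fold_right Rmult 1 (map (rho n) v).
Definition Sstr (n : nat) := flat_map all_strings (seq 0 (S n)).
Fixpoint tuples {A} (k : nat) (S : list A) : list (list A) :=
  match k with O => [[]] | S k' => flat_map (fun s => map (cons s) (tuples k' S)) S end.
Definition Ulist (n : nat) := flat_map (fun k => tuples k (Sstr n)) (seq 0 (S n)).

Lemma half_sum l : sumL (fun s => (/2) ^ (length s)) (all_strings l) = 1.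
Proof. induction l; simpl; [ring|]. rewrite sumL_flat_map.
  transitivity (sumL (fun s => (/2) ^ (length s)) (all_strings l)); [|exact IHl].
  apply sumL_ext. intros s _. simpl. field. Qed.

Lemma sumL_const {A} (c : R) (l : list A) : sumL (fun _ => c) l = INR (length l) * c.
Proof. induction l; cbn [map fold_right length]; [simpl; ring|]. rewrite IHl, S_INR. ring. Qed.

Lemma sum_rho n : sumL (rho n) (Sstr n) = / 4.
Proof. unfold Sstr. rewrite sumL_flat_map.
  rewrite (sumL_ext _ (fun _ => / (4 * (INR n + 1)))).
  - rewrite sumL_const, length_seq, S_INR. field. pose proof (pos_INR n); lra.
  - intros l _. unfold rho. unfold Rdiv. rewrite (sumL_ext _ (fun s => / (4 * (INR n + 1)) * (/2) ^ (length s))).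
    + rewrite sumL_scal, half_sum. ring.
    + intros; ring. Qed.

Lemma rv_pos n v : 0 < rv n v.
Proof. unfold rv. induction v; cbn [map fold_right]; [lra|]. apply Rmult_lt_0_compat; auto. unfold rho.
  apply Rdiv_lt_0_compat. apply pow_lt; lra. pose proof (pos_INR n); lra. Qed.

Lemma sum_tuples n k : sumL (rv n) (tuples k (Sstr n)) = (/4) ^ k.
Proof. induction k; cbn [tuples]; [unfold rv; simpl; ring|]. rewrite sumL_flat_map.
  rewrite (sumL_ext _ (fun s => rho n s * (/4) ^ k)).
  - transitivity (sumL (fun s => (/4)^k * rho n s) (Sstr n)).
    { apply sumL_ext. intros; ring. }
    rewrite sumL_scal, sum_rho. simpl. ring.
  - intros s _. rewrite sumL_map. unfold rv; simpl. rewrite <- IHk. unfold rv.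
    rewrite <- sumL_scal. reflexivity. Qed.

Lemma geom_le N : sumL (fun k => (/4) ^ k) (seq 0 N) <= 2 - 2 * (/4) ^ N.
Proof. change (sumL (fun k => (/4)^k) (seq 0 N)) with (psum (fun k => (/4)^k) N).
  induction N; [unfold psum; simpl; lra|].
  rewrite psum_S. pose proof (pow_le (/4) N ltac:(lra)). simpl pow. lra. Qed.

Lemma kraft n : sumL (rv n) (Ulist n) <= 2.
Proof. unfold Ulist. rewrite sumL_flat_map.
  rewrite (sumL_ext _ (fun k => (/4)^k)) by (intros; apply sum_tuples).
  pose proof (geom_le (S n)). pose proof (pow_le (/4) (S n) ltac:(lra)). lra. Qed.

Lemma log2_rv n v : - log2 (rv n v) = sumL (fun s => INR (length s) + log2 (4 * (INR n + 1))) v.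
Proof. assert (Hn : 0 < 4 * (INR n + 1)) by (pose proof (pos_INR n); lra).
  induction v; unfold rv in *; cbn [map fold_right].
  - unfold log2. rewrite ln_1. field. pose proof ln_lt_2; lra.
  - unfold log2 in *. rewrite ln_mult. 2:{ unfold rho; apply Rdiv_lt_0_compat; auto. apply pow_lt; lra. }
    2:{ apply (rv_pos n v). }
    rewrite <- IHv. unfold rho. rewrite ln_div; auto. 2:{ apply pow_lt; lra. }
    rewrite ln_pow by lra. rewrite ln_Rinv by lra. field. pose proof ln_lt_2; lra. Qed.

Lemma in_tuples {A} (S : list A) v : (forall s, In s v -> In s S) -> In v (tuples (length v) S).
Proof. induction v; simpl; intros H; auto. apply in_flat_map. exists a; split; auto.
  apply in_map. apply IHv; auto. Qed.

Lemma in_Ulist n v : (length v <= n)%nat -> (forall s, In s v -> (length s <= n)%nat) -> In v (Ulist n).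
Proof. intros Hl Hs. unfold Ulist. apply in_flat_map. exists (length v). split.
  - apply in_seq; lia.
  - apply in_tuples. intros s Hsv. unfold Sstr. apply in_flat_map. exists (length s). split.
    + apply in_seq. specialize (Hs s Hsv). lia.
    + apply in_all_strings. Qed.

Lemma kept_in {A} (fr : list A) m s : In s (kept fr m) -> In s fr.
Proof. revert m; induction fr; intros m H; destruct m; simpl in *; try contradiction.
  destruct b; simpl in H; [destruct H; auto|]; right; eapply IHfr; eauto. Qed.

Lemma kept_len {A} (fr : list A) m : (length (kept fr m) <= length fr)%nat.
Proof. revert m; induction fr; intros m; destruct m; simpl; try lia.
  destruct b; simpl; specialize (IHfr m); lia. Qed.

Lemma kept_sum {A} (f : A -> R) fr m : (forall x, 0 <= f x) -> sumL f (kept fr m) <= sumL f fr.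
Proof. intros Hf. revert m; induction fr; intros m; destruct m; cbn [kept map fold_right]; try lra.
  - apply Rplus_le_le_0_compat; auto. apply sumL_nonneg; auto.
  - destruct b; cbn [map fold_right]; specialize (IHfr m); specialize (Hf a); lra. Qed.

Lemma filter_sum {A} (f : A -> R) p l : (forall x, 0 <= f x) -> sumL f (filter p l) <= sumL f l.
Proof. intros Hf. induction l; simpl; [lra|]. destruct (p a); cbn [map fold_right]; specialize (Hf a); lra. Qed.

Lemma cut_len x c : length (cut x c) = length c.
Proof. revert x; induction c; simpl; auto. Qed.

Lemma cut_elem x c s : In s (cut x c) -> (length s <= length x)%nat.
Proof. revert x; induction c; simpl; intros x H; [contradiction|]. destruct H as [<-|H].
  - rewrite length_firstn; lia.
  - apply IHc in H. rewrite length_skipn in H. lia. Qed.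

Lemma cut_sq x c : sumL (fun s => INR (length s) ^ 2) (cut x c) <= gsq c.
Proof. revert x; induction c; intros x; unfold gsq; cbn [cut map fold_right]; [lra|].
  specialize (IHc (skipn a x)). unfold gsq in IHc.
  assert (INR (length (firstn a x)) <= INR a) by (apply le_INR; rewrite length_firstn; lia).
  pose proof (pos_INR (length (firstn a x))). nra. Qed.

Lemma Yge_in n J L x c m s : In s (Y_ge n J L (x, c, m)) ->
  In s (cut x c) /\ INR J / INR L * log2 (INR n) <= INR (length s).
Proof. unfold Y_ge. intros H. apply filter_In in H as [H1 H2]. split.
  - eapply kept_in; eauto.
  - destruct (Rle_dec _ _); auto; discriminate. Qed.

Lemma Yge_props n J L x c m : In x (all_strings n) -> In c (comps n) ->
  (length (Y_ge n J L (x, c, m)) <= n)%nat /\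
  (forall s, In s (Y_ge n J L (x, c, m)) -> (length s <= n)%nat).
Proof. intros Hx Hc. split.
  - unfold Y_ge. eapply Nat.le_trans; [apply filter_length_le|].
    eapply Nat.le_trans; [apply kept_len|]. rewrite cut_len. eapply comps_len; eauto.
  - intros s Hs. apply Yge_in in Hs as [Hs _]. apply cut_elem in Hs.
    apply all_strings_len in Hx. lia. Qed.

Lemma pt_bound t K y : 0 < t -> 0 <= K -> t <= y -> y + K <= (/ t + K / t ^ 2) * y ^ 2.
Proof. intros Ht HK Hy.
  assert (E : (/ t + K / t ^ 2) * y ^ 2 - (y + K) = y * (y - t) / t + K * ((y - t) * (y + t)) / t ^ 2)
    by (field; lra).
  assert (0 <= y * (y - t) / t) by (apply Rdiv_le_0_compat; nra).
  assert (0 <= K * ((y - t) * (y + t)) / t ^ 2).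
  { apply Rdiv_le_0_compat; [|nra]. apply Rmult_le_pos; auto. nra. }
  lra. Qed.

Lemma cost_bound n J L x c m K : 0 < INR J / INR L * log2 (INR n) -> 0 <= K ->
  sumL (fun s => INR (length s) + K) (Y_ge n J L (x, c, m)) <=
  (/ (INR J / INR L * log2 (INR n)) + K / (INR J / INR L * log2 (INR n)) ^ 2) * gsq c.
Proof. set (t := INR J / INR L * log2 (INR n)). intros Ht HK.
  set (kap := / t + K / t ^ 2).
  assert (Hk : 0 <= kap).
  { unfold kap. apply Rplus_le_le_0_compat. apply Rlt_le, Rinv_0_lt_compat; auto.
    apply Rdiv_le_0_compat; auto. apply pow_lt; auto. }
  eapply Rle_trans.
  { apply (sumL_le _ (fun s => kap * INR (length s) ^ 2)). intros s Hs.
    apply Yge_in in Hs as [_ Hs]. apply pt_bound; auto. }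
  rewrite sumL_scal. apply Rmult_le_compat_l; auto.
  unfold Y_ge. eapply Rle_trans; [apply filter_sum; intros; apply pow2_ge_0|].
  eapply Rle_trans; [apply kept_sum; intros; apply pow2_ge_0|]. apply cut_sq. Qed.


Lemma H_bound (px : nat -> list bool -> R) (p : nat -> nat -> R) d J L n :
  p n 0%nat = 0 -> (forall k, 0 <= p n k) -> (forall m, psum (p n) m <= 1) ->
  (forall x, 0 <= px n x) -> fold_right Rplus 0 (map (px n) (all_strings n)) = 1 ->
  (forall k, 0 <= d k <= 1) ->
  0 < INR J / INR L * log2 (INR n) ->
  H_Yge px p d J L n <=
  (/ (INR J / INR L * log2 (INR n)) + log2 (4 * (INR n + 1)) / (INR J / INR L * log2 (INR n)) ^ 2)
    * Gf (p n) n n + 2 / ln 2.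
Proof. intros Hq0 Hq Hqle Hpx Hpx1 Hd Ht.
  set (t := INR J / INR L * log2 (INR n)) in *.
  set (K := log2 (4 * (INR n + 1))).
  assert (Hln2 : 0 < ln 2) by (pose proof ln_lt_2; lra).
  assert (HK : 0 <= K).
  { unfold K, log2. apply Rdiv_le_0_compat; auto. rewrite <- ln_1. apply ln_le; [lra|].
    pose proof (pos_INR n); lra. }
  unfold H_Yge.
  eapply Rle_trans.
  { apply (gibbs multiset_eqb (outcomes n) (outcome_prob (px n) (p n) d) (Y_ge n J L) (Ulist n) (rv n)).
    - apply meq_refl.
    - apply meq_sym.
    - apply meq_trans.
    - intros; apply outcome_prob_nonneg; auto.
    - intros; apply Rlt_le, rv_pos.
    - intros; apply rv_pos.
    - intros w Hw. apply in_outcomes in Hw as [x [c [m [-> [Hx [Hc Hm]]]]]].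
      destruct (Yge_props n J L x c m Hx Hc). apply in_Ulist; auto. }
  apply Rplus_le_compat.
  2:{ unfold Rdiv. apply Rmult_le_compat_r. apply Rlt_le, Rinv_0_lt_compat; auto. apply kraft. }
  eapply Rle_trans.
  { apply (sumL_le _ (fun w => (/ t + K / t ^ 2) * (outcome_prob (px n) (p n) d w * gsq (snd (fst w))))).
    intros w Hw. pose proof (outcome_prob_nonneg (px n) (p n) d w Hpx Hd Hq0 Hq Hqle) as HP.
    apply in_outcomes in Hw as [x [c [m [-> [Hx [Hc Hm]]]]]].
    rewrite log2_rv. cbn [snd fst].
    pose proof (cost_bound n J L x c m K Ht HK). fold t in H. fold K.
    set (P := outcome_prob (px n) (p n) d (x, c, m)) in *.
    set (S := sumL (fun s => INR (length s) + K) (Y_ge n J L (x, c, m))) in *.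
    replace ((/ t + K / t ^ 2) * (P * gsq c)) with (P * ((/ t + K / t ^ 2) * gsq c)) by ring.
    apply Rmult_le_compat_l; auto. }
  rewrite sumL_scal, expected_g, Hpx1. right; ring.
Qed.

Lemma log2_le_sqrt n : (1 <= n)%nat -> log2 (INR n) <= 4 * sqrt (INR n).
Proof. intros Hn. assert (H1 : 1 <= INR n) by (apply (le_INR 1); auto).
  assert (Hs : 0 < sqrt (INR n)) by (apply sqrt_lt_R0; lra).
  assert (E : ln (INR n) = 2 * ln (sqrt (INR n))).
  { rewrite <- (sqrt_sqrt (INR n)) at 1 by lra. rewrite ln_mult by auto. ring. }
  pose proof (ln_le_x (sqrt (INR n)) Hs).
  assert (0 <= ln (INR n)) by (rewrite <- ln_1; apply ln_le; lra).
  pose proof ln_lt_2. unfold log2. apply (Rmult_le_reg_r (ln 2)); [lra|].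
  unfold Rdiv. rewrite Rmult_assoc, Rinv_l by lra. nra. Qed.

Lemma K_le n : (5 <= n)%nat -> log2 (4 * (INR n + 1)) <= 2 * log2 (INR n).
Proof. intros Hn. assert (H5 : INR 5 <= INR n) by (apply le_INR; auto). simpl in H5.
  unfold log2. pose proof ln_lt_2. unfold Rdiv.
  assert (ln (4 * (INR n + 1)) <= 2 * ln (INR n)).
  { replace (2 * ln (INR n)) with (ln (INR n * INR n)) by (rewrite ln_mult by lra; ring).
    apply ln_le; nra. }
  assert (0 < / ln 2) by (apply Rinv_0_lt_compat; lra). nra. Qed.

Lemma sqrt_ge_self r : 0 <= r <= 1 -> r <= sqrt r.
Proof. intros H. pose proof (sqrt_sqrt r (proj1 H)). pose proof (sqrt_pos r).
  assert (sqrt r <= 1) by (rewrite <- sqrt_1; apply sqrt_le_1_alt; lra). nra. Qed.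

Lemma per_n (p : nat -> nat -> R) (ell : nat -> R) (alpha : R) (d : nat -> R)
  (px : nat -> list bool -> R) (B : R) (J L n : nat)
  (Hp_nonneg : forall n k, 0 <= p n k)
  (Hp_pos : forall n, p n 0%nat = 0)
  (Hp_sum : forall n, is_series (p n) 1)
  (Hmean : forall n, is_series (fun k => INR k * p n k) (ell n))
  (Hd : forall k, 0 <= d k <= 1)
  (Hpx_nonneg : forall n x, 0 <= px n x)
  (Hpx_sum : forall n, fold_right Rplus 0 (map (px n) (all_strings n)) = 1)
  (Ha : 0 < alpha) (HB : 0 <= B)
  (Hn : (5 <= n)%nat)
  (Hal : Rabs (log2 (INR n) / ell n - alpha) < alpha / 2)
  (Hser : ex_series (fun k => (INR k / log2 (INR n)) ^ 2 * p n k) /\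
          Series (fun k => (INR k / log2 (INR n)) ^ 2 * p n k) <= B)
  (HL : (1 <= L)%nat) (HJL : (L < J)%nat) :
  H_Yge px p d J L n <=
  12 * alpha * B * (INR L / INR J) * INR n + 48 * alpha ^ 2 * B ^ 2 * log2 (INR n) + 4.
Proof.
  set (lam := log2 (INR n)) in *.
  set (q := p n).
  assert (Hln2 : / 2 < ln 2) by apply ln_lt_2.
  assert (Hn5 : INR 5 <= INR n) by (apply le_INR; auto). simpl in Hn5.
  assert (Hlam : 0 < lam).
  { unfold lam, log2. apply Rdiv_lt_0_compat; [|lra]. rewrite <- ln_1. apply ln_increasing; lra. }
  assert (HLr : 1 <= INR L) by (apply (le_INR 1); auto).
  assert (HJr : INR L < INR J) by (apply lt_INR; auto).
  set (r := INR L / INR J).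
  assert (Hr : 0 < r <= 1).
  { unfold r. split. apply Rdiv_lt_0_compat; lra.
    apply (Rmult_le_reg_r (INR J)); [lra|]. unfold Rdiv. rewrite Rmult_assoc, Rinv_l by lra. lra. }
  set (t := INR J / INR L * lam).
  assert (Ht : t = lam / r) by (unfold t, r; field; lra).
  assert (Htl : lam <= t).
  { rewrite Ht. apply (Rmult_le_reg_r r); [lra|]. unfold Rdiv. rewrite Rmult_assoc, Rinv_l by lra. nra. }
  assert (Htp : 0 < t) by lra.
  apply Rabs_def2 in Hal as [Hal1 Hal2].
  assert (Hell : 0 < ell n).
  { destruct (Rle_or_lt (ell n) 0) as [Hle|Hlt]; auto.
    destruct (Req_dec (ell n) 0) as [E|E].
    - rewrite E in Hal2. unfold Rdiv in Hal2. rewrite Rinv_0, Rmult_0_r in Hal2. lra.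
    - assert (lam / ell n < 0).
      { unfold Rdiv. apply Rmult_pos_neg; auto. apply Rinv_lt_0_compat; lra. } lra. }
  assert (Hinvell : / ell n <= 2 * alpha / lam).
  { assert (lam / ell n <= 2 * alpha) by lra. unfold Rdiv in *.
    apply (Rmult_le_reg_r lam); auto. rewrite Rmult_assoc, Rinv_l by lra. lra. }
  destruct Hser as [Hex HSer].
  set (Ser := Series (fun k => (INR k / lam) ^ 2 * q k)) in *.
  set (M2 := lam ^ 2 * Ser).
  assert (HM2s : is_series (fun k => INR k ^ 2 * q k) M2).
  { apply (is_series_ext (fun k => lam ^ 2 * ((INR k / lam) ^ 2 * q k))).
    - intros k. change (lam ^ 2 * ((INR k / lam) ^ 2 * q k) = INR k ^ 2 * q k). field. lra.
    - apply is_series_mult_l. apply Series_correct. exact Hex. }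
  assert (Hqle : forall m, psum q m <= 1).
  { intros m. apply psum_le_series. apply (Hp_sum n). apply (Hp_nonneg n). }
  assert (HS1 := fun m => S1 q M2 m (Hp_nonneg n) (Hp_sum n) HM2s).
  assert (HM2 : 0 <= M2).
  { specialize (HS1 0%nat). unfold psum in HS1. simpl in HS1. lra. }
  assert (HM2B : M2 <= B * lam ^ 2).
  { unfold M2. rewrite (Rmult_comm B). apply Rmult_le_compat_l; [apply pow2_ge_0|exact HSer]. }
  set (a := 2 * M2 / ell n).
  assert (Ha0 : 0 <= a) by (unfold a; apply Rdiv_le_0_compat; lra).
  assert (HG := Gf_lin q (Hp_pos n) (Hp_nonneg n) Hqle M2 a (a ^ 2) a Ha0 (pow2_ge_0 a) HS1).
  assert (HGn : Gf q n n <= a * INR n + a ^ 2).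
  { apply HG; auto.
    - intros m Hm1 Hm0. pose proof (S2 q M2 (ell n) m (Hp_nonneg n) Hm1 (Hmean n) HM2s) as T.
      assert (Hm : 1 <= INR m) by (apply (le_INR 1); auto).
      assert (M2 / INR m <= ell n / 2).
      { apply (Rmult_le_reg_r (INR m)); [lra|]. unfold Rdiv. rewrite Rmult_assoc, Rinv_l by lra.
        unfold a in Hm0. unfold Rdiv in Hm0.
        assert (2 * M2 <= INR m * ell n).
        { apply (Rmult_le_reg_r (/ ell n)). apply Rinv_0_lt_compat; auto.
          replace (INR m * ell n * / ell n) with (INR m) by (field; lra). lra. } lra. }
      assert (psum (fun k => INR k * q k) m >= ell n / 2) by lra.
      unfold a. unfold Rdiv. 
      assert (2 * M2 * / ell n * (ell n / 2) = M2) by (field; lra).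
      assert (0 <= 2 * M2 * / ell n) by (apply Rmult_le_pos; [lra| apply Rlt_le, Rinv_0_lt_compat; auto]).
      unfold Rdiv in *. nra.
    - intros m Hm. pose proof (pos_INR m). nra. }
  assert (HaB : a <= 4 * alpha * B * lam).
  { unfold a. unfold Rdiv. 
    assert (2 * M2 * / ell n <= 2 * (B * lam ^ 2) * (2 * alpha / lam)).
    { apply Rmult_le_compat; try lra. apply Rlt_le, Rinv_0_lt_compat; auto. }
    assert (2 * (B * lam ^ 2) * (2 * alpha / lam) = 4 * alpha * B * lam) by (field; lra). lra. }
  assert (HH := H_bound px p d J L n (Hp_pos n) (Hp_nonneg n) Hqle (Hpx_nonneg n) (Hpx_sum n) Hd).
  fold lam t in HH. specialize (HH Htp).
  set (K := log2 (4 * (INR n + 1))) in HH.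
  assert (HK : K <= 2 * lam) by (apply K_le; auto).
  assert (HK0 : 0 <= K).
  { unfold K, log2. apply Rdiv_le_0_compat; [|lra]. rewrite <- ln_1. apply ln_le; lra. }
  set (kap := / t + K / t ^ 2) in HH.
  assert (Hkap : kap <= 3 * r / lam).
  { unfold kap. assert (K / t ^ 2 <= 2 / t).
    { unfold Rdiv. apply (Rmult_le_reg_r (t ^ 2)). apply pow_lt; auto.
      rewrite Rmult_assoc, Rinv_l by (apply pow_nonzero; lra).
      replace (2 * / t * t ^ 2) with (2 * t) by (field; lra). lra. }
    assert (/ t = r / lam) by (rewrite Ht; field; lra). lra. }
  assert (Hkap0 : 0 <= kap).
  { unfold kap. apply Rplus_le_le_0_compat. apply Rlt_le, Rinv_0_lt_compat; auto.
    apply Rdiv_le_0_compat; auto. apply pow_lt; auto. }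
  assert (HG0 : 0 <= Gf q n n) by (apply (Gf_nonneg q (Hp_nonneg n) Hqle)).
  assert (HGb : Gf q n n <= 4 * alpha * B * lam * INR n + (4 * alpha * B * lam) ^ 2).
  { pose proof (pos_INR n). assert (a ^ 2 <= (4 * alpha * B * lam) ^ 2) by (apply pow_incr; lra). nra. }
  assert (kap * Gf q n n <= 3 * r / lam * (4 * alpha * B * lam * INR n + (4 * alpha * B * lam) ^ 2)).
  { apply Rmult_le_compat; auto. }
  assert (E : 3 * r / lam * (4 * alpha * B * lam * INR n + (4 * alpha * B * lam) ^ 2) =
     12 * alpha * B * r * INR n + 48 * alpha ^ 2 * B ^ 2 * r * lam) by (field; lra).
  assert (48 * alpha ^ 2 * B ^ 2 * r * lam <= 48 * alpha ^ 2 * B ^ 2 * lam).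
  { assert (0 <= 48 * alpha ^ 2 * B ^ 2 * lam).
    { apply Rmult_le_pos; [|lra]. apply Rmult_le_pos; [|apply pow2_ge_0]. apply Rmult_le_pos; [lra|apply pow2_ge_0]. }
    nra. }
  assert (2 / ln 2 <= 4).
  { apply (Rmult_le_reg_r (ln 2)); [lra|]. unfold Rdiv. rewrite Rmult_assoc, Rinv_l by lra. lra. }
  unfold q in *. lra.
Qed.

Theorem lemma4
  (p : nat -> nat -> R) (ell : nat -> R) (alpha : R)
  (d : nat -> R)
  (px : nat -> list bool -> R)
  (Hp_nonneg : forall n k, 0 <= p n k)
  (Hp_pos : forall n, p n 0%nat = 0)
  (Hp_sum : forall n, is_series (p n) 1)
  (Hmean : forall n, is_series (fun k => INR k * p n k) (ell n))
  (Halpha : is_lim_seq (fun n => log2 (INR n) / ell n) alpha)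
  (Halpha_pos : 0 < alpha)
  (Hreg1 : exists B, forall n, (2 <= n)%nat -> ell n / log2 (INR n) <= B)
  (Hreg2 : exists B, forall n, (2 <= n)%nat ->
      ex_series (fun k => (INR k / log2 (INR n)) ^ 2 * p n k) /\
      Series (fun k => (INR k / log2 (INR n)) ^ 2 * p n k) <= B)
  (Hd : forall k, 0 <= d k <= 1)
  (Hpx_nonneg : forall n x, 0 <= px n x)
  (Hpx_sum : forall n, fold_right Rplus 0 (map (px n) (all_strings n)) = 1) :
  exists S : R, forall (J L : nat) (delta : R),
    (1 <= L)%nat -> (L < J)%nat -> 0 < delta ->
    Rbar_le (LimSup_seq (fun n => H_Yge px p d J L n / INR n))
            (Finite (2 * (S * sqrt (INR L / INR J) + delta))).
Proof.
  destruct Hreg2 as [B0 HB0]. set (B := Rabs B0).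
  assert (HB : 0 <= B) by apply Rabs_pos.
  exists (12 * alpha * B). intros J L delta HL HJL Hdelta.
  set (r := INR L / INR J).
  assert (HLr : 1 <= INR L) by (apply (le_INR 1); auto).
  assert (HJr : INR L < INR J) by (apply lt_INR; auto).
  assert (Hr : 0 <= r <= 1).
  { unfold r. split. apply Rlt_le, Rdiv_lt_0_compat; lra.
    apply (Rmult_le_reg_r (INR J)); [lra|]. unfold Rdiv. rewrite Rmult_assoc, Rinv_l by lra. lra. }
  assert (Hsr := sqrt_ge_self r Hr).
  set (c := 2 * (12 * alpha * B * sqrt r + delta)).
  assert (Hev : eventually (fun n => H_Yge px p d J L n / INR n <= c)).
  { apply is_lim_seq_spec in Halpha.
    assert (Ha2 : 0 < alpha / 2) by lra.
    destruct (Halpha (mkposreal _ Ha2)) as [N1 HN1]. simpl in HN1.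
    set (C := 192 * alpha ^ 2 * B ^ 2 + 4).
    assert (HC : 0 <= C) by (unfold C; pose proof (pow2_ge_0 alpha); pose proof (pow2_ge_0 B); nra).
    destruct (INR_archimed 1 ((C / delta) ^ 2) ltac:(lra)) as [N3 HN3].
    exists (N1 + N3 + 5)%nat. intros n Hn.
    assert (Hser : ex_series (fun k => (INR k / log2 (INR n)) ^ 2 * p n k) /\
          Series (fun k => (INR k / log2 (INR n)) ^ 2 * p n k) <= B).
    { destruct (HB0 n ltac:(lia)) as [H1 H2]. split; auto. unfold B. pose proof (Rle_abs B0). lra. }
    pose proof (per_n p ell alpha d px B J L n Hp_nonneg Hp_pos Hp_sum Hmean Hd Hpx_nonneg Hpx_sum
      Halpha_pos HB ltac:(lia) (HN1 n ltac:(lia)) Hser HL HJL) as HH.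
    fold r in HH.
    assert (Hn5 : INR 5 <= INR n) by (apply le_INR; lia). simpl in Hn5.
    assert (Hlam := log2_le_sqrt n ltac:(lia)).
    set (s := sqrt (INR n)) in *.
    assert (Hss : s * s = INR n) by (apply sqrt_sqrt; lra).
    assert (Hs0 : 0 <= s) by apply sqrt_pos.
    assert (Hs1 : 1 <= s) by nra.
    assert (HN3' : INR N3 <= INR n) by (apply le_INR; lia).
    assert (Hcs : C <= delta * s).
    { assert ((C / delta) ^ 2 < s * s) by lra.
      assert (C / delta < s).
      { destruct (Rlt_or_le (C / delta) s); auto. assert (0 <= C / delta) by (apply Rdiv_le_0_compat; lra).
        nra. }
      apply (Rmult_lt_compat_l delta) in H0; auto.
      replace (delta * (C / delta)) with C in H0 by (field; lra). lra. }
    assert (Hlog : 0 <= log2 (INR n)).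
    { unfold log2. apply Rdiv_le_0_compat. rewrite <- ln_1. apply ln_le; lra.
      pose proof ln_lt_2; lra. }
    assert (Hab : 0 <= 48 * alpha ^ 2 * B ^ 2).
    { pose proof (pow2_ge_0 alpha); pose proof (pow2_ge_0 B). apply Rmult_le_pos; [|lra]. nra. }
    assert (48 * alpha ^ 2 * B ^ 2 * log2 (INR n) + 4 <= C * s).
    { assert (48 * alpha ^ 2 * B ^ 2 * log2 (INR n) <= 48 * alpha ^ 2 * B ^ 2 * (4 * s))
        by (apply Rmult_le_compat_l; auto). unfold C. nra. }
    assert (C * s <= delta * INR n) by nra.
    assert (H_Yge px p d J L n <= (12 * alpha * B * r + delta) * INR n) by lra.
    apply (Rmult_le_reg_r (INR n)); [lra|]. unfold Rdiv. rewrite Rmult_assoc, Rinv_l by lra.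
    assert (0 <= 12 * alpha * B) by nra.
    assert (12 * alpha * B * r <= 12 * alpha * B * sqrt r) by (apply Rmult_le_compat_l; auto).
    assert (0 <= sqrt r) by apply sqrt_pos.
    assert (0 <= 12 * alpha * B * sqrt r) by (apply Rmult_le_pos; auto).
    unfold c. nra. }
  pose proof (LimSup_le _ _ Hev) as Hle. rewrite LimSup_seq_const in Hle. exact Hle.
Qed.
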